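(* Let $G=(V,E)$ with colouring $f$ satisfy $|B|>|R|$. Let $E^*$ be the set of pairs $\{u,v\}\notin E$ ($u\neq v$) with at least one of $u,v$ blue. Define $b^*(v)=\max(r(v)-b(v),0)$ for $v\in R$ and $b^*(v)=b(v)-r(v)$ for $v\in B$. Consider the integer program (IP-1a) in variables $y_e$, $e\in E^*$: maximize $-\sum_{e\in E^*}y_e$ subject to $\sum_{u\in N_{E^*}(v)\cap B}y_{uv}=b^*(v)$ for all $v\in R$; $-\sum_{u\in N_{E^*}(v)\cap B}y_{uv}+\sum_{u\in N_{E^*}(v)\cap R}y_{uv}\le b^*(v)$ for all $v\in B$; $y_e\in\{0,1\}$ for all $e\in E^*$. Then a set $Y\subseteq E^*$ has indicator vector optimal for (IP-1a) if and only if $E\cup Y$ is an optimal solution to the MIAE problem on $(G,f)$; moreover every optimal MIAE solution $E'$ satisfies $E'\setminus E\subseteq E^*$, and the optimal value of (IP-1a) equals $-\min|E'\setminus E|$ over MIAE-feasible $E'$.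
   Context: Graphs are finite, simple and undirected; $B,R$ are the blue and red nodes under $f:V\to\{B,R\}$; $b(v),r(v)$ are the numbers of blue and red neighbours of $v$ in $G$; $N_{E^*}(v)=\{u:\{u,v\}\in E^*\}$. A node is under illusion in $(V,E')$ if it has strictly more red than blue neighbours there. An optimal solution to MIAE is an edge set $E'\supseteq E$ on $V$ such that no node is under illusion in $(V,E')$ and $|E'\setminus E|$ is minimum among all such sets. *)

(* Defs.v *)
From mathcomp Require Import all_boot all_order all_algebra.
Set Implicit Arguments. Unset Strict Implicit. Unset Printing Implicit Defensive.
Import Order.TTheory GRing.Theory Num.Theory.
Local Open Scope ring_scope.

Inductive colour := Blue | Red.

Section Defs.
Variable T : finType.

Definition is_edge_set (E : {set {set T}}) : Prop :=
  forall e, e \in E -> #|e| = 2%N.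

Definition blue (f : T -> colour) : {set T} :=
  [set v | if f v is Blue then true else false].
Definition red (f : T -> colour) : {set T} :=
  [set v | if f v is Red then true else false].

Definition nbhd (E : {set {set T}}) (v : T) : {set T} :=
  [set u | [set u; v] \in E].

Definition bdeg f E v : nat := #|nbhd E v :&: blue f|.
Definition rdeg f E v : nat := #|nbhd E v :&: red f|.

Definition under_illusion f E v : bool := (bdeg f E v < rdeg f E v)%N.

Definition MIAE_feasible f (E E' : {set {set T}}) : Prop :=
  is_edge_set E' /\ E \subset E' /\ forall v, ~~ under_illusion f E' v.

Definition MIAE_optimal f (E E' : {set {set T}}) : Prop :=
  MIAE_feasible f E E' /\
  forall E'', MIAE_feasible f E E'' -> (#|E' :\: E| <= #|E'' :\: E|)%N.

Definition Estar f (E : {set {set T}}) : {set {set T}} :=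
  [set e : {set T} | [&& #|e| == 2%N, e \notin E & e :&: blue f != set0]].

Definition bstar f E v : int :=
  if f v is Red then Num.max ((rdeg f E v)%:Z - (bdeg f E v)%:Z) 0
  else (bdeg f E v)%:Z - (rdeg f E v)%:Z.

(* IP-1a over a vector y indexed by E^* (values of y outside E^* are ignored) *)
Definition IP_obj f E (y : {set T} -> int) : int :=
  - \sum_(e in Estar f E) y e.

Definition IP_feasible f E (y : {set T} -> int) : Prop :=
  (forall e, e \in Estar f E -> y e = 0 \/ y e = 1) /\
  (forall v, v \in red f ->
     \sum_(u in nbhd (Estar f E) v :&: blue f) y [set u; v] = bstar f E v) /\
  (forall v, v \in blue f ->
     - \sum_(u in nbhd (Estar f E) v :&: blue f) y [set u; v]
     + \sum_(u in nbhd (Estar f E) v :&: red f) y [set u; v] <= bstar f E v).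

Definition IP_optimal f E (y : {set T} -> int) : Prop :=
  IP_feasible f E y /\
  forall y', IP_feasible f E y' -> IP_obj f E y' <= IP_obj f E y.

Definition indicator (Y : {set {set T}}) : {set T} -> int :=
  fun e => if e \in Y then 1 else 0.

End Defs.

(* Main.v *)
Require Import Defs.
From mathcomp Require Import all_boot all_order all_algebra zify.
From Stdlib Require Import Classical.
Set Implicit Arguments. Unset Strict Implicit.
Import Order.TTheory GRing.Theory Num.Theory.
Local Open Scope ring_scope.

Lemma A1 (r b k : nat) : (r <= b + k)%N -> ((0 < k)%N -> (b + k <= r)%N) ->
  k%:Z = Num.max (r%:Z - b%:Z) 0.
Proof. move=> h1 h2; case: (posnP k) => [k0|kp]; [|have := h2 kp]; lia. Qed.
Lemma A2 (r b k k' : nat) : (r + k' <= b + k)%N -> - k%:Z + k'%:Z <= b%:Z - r%:Z.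
Proof. lia. Qed.
Lemma A3 (r b k k' : nat) : - k%:Z + k'%:Z <= b%:Z - r%:Z -> (r + k' <= b + k)%N.
Proof. lia. Qed.
Lemma A4 (r b k : nat) : k%:Z = Num.max (r%:Z - b%:Z) 0 -> (r + 0 <= b + k)%N.
Proof. lia. Qed.

Section Aux.
Variable T : finType.
Variable f : T -> colour.
Implicit Types E Y : {set {set T}}.

Lemma inR v : (v \in red f) = ~~ (v \in blue f).
Proof. by rewrite !inE; case: (f v). Qed.
Lemma in_nbhd E u v : (u \in nbhd E v) = ([set u; v] \in E).
Proof. by rewrite inE. Qed.

Lemma nbhdU E Y v : nbhd (E :|: Y) v = nbhd E v :|: nbhd Y v.
Proof. by apply/setP=> u; rewrite !inE. Qed.

Lemma cardU_disj (S : finType) (A B C : {set S}) :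
  (forall x, x \in A -> x \in B -> false) ->
  #|(A :|: B) :&: C| = (#|A :&: C| + #|B :&: C|)%N.
Proof.
move=> H; rewrite setIUl cardsU.
suff -> : A :&: C :&: (B :&: C) = set0 by rewrite cards0 subn0.
apply/setP=> x; rewrite !inE.
case hA: (x \in A); case hB: (x \in B) => //=; last by rewrite andbF.
by have := H x hA hB.
Qed.

Lemma disjE E Y : (forall e, e \in Y -> e \notin E) ->
  forall u v, u \in nbhd E v -> u \in nbhd Y v -> false.
Proof. by move=> H u v; rewrite !in_nbhd => h1 /H; rewrite h1. Qed.

Lemma bdegU E Y v : (forall e, e \in Y -> e \notin E) ->
  bdeg f (E :|: Y) v = (bdeg f E v + bdeg f Y v)%N.
Proof. move=> H; rewrite /bdeg nbhdU cardU_disj // => x; exact: disjE H x v. Qed.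
Lemma rdegU E Y v : (forall e, e \in Y -> e \notin E) ->
  rdeg f (E :|: Y) v = (rdeg f E v + rdeg f Y v)%N.
Proof. move=> H; rewrite /rdeg nbhdU cardU_disj // => x; exact: disjE H x v. Qed.

Lemma set2_eq (u a b : T) : a != b -> ([set u; a] == [set a; b]) = (u == b).
Proof.
move=> ab; apply/eqP/eqP => [h|->]; last by rewrite setUC.
have : b \in [set u; a] by rewrite h !inE eqxx orbT.
by rewrite !inE => /orP[/eqP->//|/eqP ba]; move: ab; rewrite ba eqxx.
Qed.

Lemma nbhd_rem E a b : a != b -> nbhd (E :\ [set a; b]) a = nbhd E a :\ b.
Proof. by move=> ab; apply/setP=> u; rewrite !inE set2_eq. Qed.

Lemma nbhd_rem_other E a b w : w != a -> w != b ->
  nbhd (E :\ [set a; b]) w = nbhd E w.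
Proof.
move=> wa wb; apply/setP=> u; rewrite !inE.
case: eqP => // h; exfalso.
have : w \in [set a; b] by rewrite -h !inE eqxx orbT.
by rewrite !inE (negbTE wa) (negbTE wb).
Qed.

Definition ok E v := (rdeg f E v <= bdeg f E v)%N.

Lemma ok_rem_red E a b : a != b -> b \in red f -> ok E a -> ok (E :\ [set a; b]) a.
Proof.
move=> ab bR; rewrite /ok /rdeg /bdeg nbhd_rem //.
have -> : (nbhd E a :\ b) :&: blue f = nbhd E a :&: blue f.
  apply/setP=> u; rewrite !in_setI !in_setD1; have [->|//] := eqVneq u b.
  have bB : (b \in blue f) = false by move: bR; rewrite inR => /negbTE.
  by rewrite bB !andbF.
move=> h; apply: leq_trans h; apply: subset_leq_card; apply: setSI; exact: subD1set.
Qed.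


Lemma edge2 (e : {set T}) : #|e| = 2%N -> exists a b, a != b /\ e = [set a; b].
Proof. by move=> h; apply/cards2P; rewrite h. Qed.

Lemma okE E v : ~~ under_illusion f E v = ok E v.
Proof. by rewrite /under_illusion /ok -leqNgt. Qed.

Lemma set2C (a b : T) : [set a; b] = [set b; a].
Proof. by rewrite setUC. Qed.

Lemma rem_feasible E E' a b : MIAE_feasible f E E' -> [set a; b] \in E' ->
  [set a; b] \notin E -> a != b -> ok (E' :\ [set a; b]) a ->
  ok (E' :\ [set a; b]) b -> MIAE_feasible f E (E' :\ [set a; b]).
Proof.
move=> [He [sub Hok]] inE' nE ab oka okb; split; [|split].
- by move=> e; rewrite in_setD1 => /andP[_ /He].
- apply/subsetP=> x xE; rewrite in_setD1 (subsetP sub) // andbT.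
  by apply/eqP=> h; move: nE; rewrite -h xE.
- move=> w; rewrite okE.
  have [->//|wa] := eqVneq w a; have [->//|wb] := eqVneq w b.
  rewrite /ok /rdeg /bdeg nbhd_rem_other //; by move: (Hok w); rewrite okE.
Qed.

Lemma rem_card E E' e : e \in E' :\: E -> (#|(E' :\ e) :\: E| < #|E' :\: E|)%N.
Proof.
move=> h; rewrite (cardsD1 e (E' :\: E)) h.
have -> : (E' :\ e) :\: E = (E' :\: E) :\ e.
  by apply/setP=> x; rewrite !inE andbCA.
by [].
Qed.

Lemma opt_no_rem E E' a b : MIAE_optimal f E E' -> [set a; b] \in E' ->
  [set a; b] \notin E -> a != b -> ok (E' :\ [set a; b]) a ->
  ok (E' :\ [set a; b]) b -> False.
Proof.
move=> [F O] i n ab oa ob.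
have := O _ (@rem_feasible E E' a b F i n ab oa ob).
by rewrite leqNgt rem_card // in_setD n.
Qed.

Lemma set2_blue (u v : T) :
  ([set u; v] :&: blue f != set0) = (u \in blue f) || (v \in blue f).
Proof.
apply/set0Pn/orP => [[x]|[h|h]].
- by rewrite in_setI in_set2 => /andP[/orP[/eqP<-|/eqP<-] xb]; [left|right].
- by exists u; rewrite in_setI in_set2 eqxx h.
- by exists v; rewrite in_setI in_set2 eqxx orbT h.
Qed.

Lemma inEstar E (u v : T) : u != v ->
  ([set u; v] \in Estar f E) =
  ([set u; v] \notin E) && ((u \in blue f) || (v \in blue f)).
Proof. by move=> uv; rewrite inE cards2 uv /= set2_blue. Qed.

Lemma Estar_neq E u v : [set u; v] \in Estar f E -> u != v.
Proof.
rewrite inE cards2 => /andP[h _]; by case: (u != v) h.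
Qed.

Lemma Estar_notE E e : e \in Estar f E -> e \notin E.
Proof. by rewrite inE => /and3P[]. Qed.

Lemma opt_sub E E' : MIAE_optimal f E E' -> E' :\: E \subset Estar f E.
Proof.
move=> O; have [[He _] _] := O.
apply/subsetP=> e; rewrite in_setD => /andP[nE eE'].
have [a [b [ab ee]]] := @edge2 e (He _ eE'); subst e.
rewrite inEstar // nE /=.
apply/negPn/negP; rewrite negb_or => /andP[na nb].
have [[_ [_ Hok]] _] := O.
apply: (@opt_no_rem E E' a b O eE' nE ab).
- by apply: ok_rem_red => //; [rewrite inR | rewrite -okE].
- rewrite set2C; apply: ok_rem_red; first by rewrite eq_sym.
  + by rewrite inR.
  + by rewrite -okE.
Qed.

Lemma red_rdeg0 E Y v : Y \subset Estar f E -> v \in red f -> rdeg f Y v = 0%N.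
Proof.
move=> sY vR; apply/eqP; rewrite cards_eq0; apply/eqP/setP=> u.
rewrite in_setI in_set0 in_nbhd; apply/negbTE/negP => /andP[/(subsetP sY) h uR].
have uv := Estar_neq h.
by move: h vR uR; rewrite inEstar // !inR => /andP[_ /orP[] ->].
Qed.

Lemma sum_ind E Y v (C : {set T}) : Y \subset Estar f E ->
  \sum_(u in nbhd (Estar f E) v :&: C) indicator Y [set u; v] =
  (#|nbhd Y v :&: C|)%:Z.
Proof.
move=> sY; rewrite /indicator -big_mkcondr /= sumr_const natz.
congr Posz; apply: eq_card => u; rewrite unfold_in /= !in_setI !in_nbhd.
case h: ([set u; v] \in Y); last by rewrite !andbF.
by rewrite (subsetP sY _ h) andbT.
Qed.

Lemma obj_ind E Y : Y \subset Estar f E -> IP_obj f E (indicator Y) = - (#|Y|%:Z).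
Proof.
move=> sY; rewrite /IP_obj /indicator -big_mkcondr /= sumr_const natz.
congr (- Posz _); apply: eq_card => e; rewrite unfold_in /=.
case h: (e \in Y); last by rewrite andbF.
by rewrite andbT (subsetP sY _ h).
Qed.


Lemma bstar_red E v : v \in red f ->
  bstar f E v = Num.max ((rdeg f E v)%:Z - (bdeg f E v)%:Z) 0.
Proof. by rewrite /bstar inE; case: (f v). Qed.
Lemma bstar_blue E v : v \in blue f ->
  bstar f E v = (bdeg f E v)%:Z - (rdeg f E v)%:Z.
Proof. by rewrite /bstar inE; case: (f v). Qed.

Lemma YD E Y : Y \subset Estar f E -> (E :|: Y) :\: E = Y.
Proof.
move=> sY; apply/setP=> e; rewrite in_setD in_setU.
case eE: (e \in E) => /=; last by [].
apply/esym/negbTE/negP => h; by move: (Estar_notE (subsetP sY _ h)); rewrite eE.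
Qed.

Lemma EU E E' : E \subset E' -> E :|: (E' :\: E) = E'.
Proof.
move=> sub; apply/setP=> e; rewrite in_setU in_setD.
by case eE: (e \in E) => //=; rewrite (subsetP sub _ eE).
Qed.

Lemma disjY E Y : Y \subset Estar f E -> forall e, e \in Y -> e \notin E.
Proof. by move=> sY e h; apply: Estar_notE (subsetP sY _ h). Qed.

Lemma ok_rem_blue E' v u : v != u -> u \in blue f -> u \in nbhd E' v ->
  (rdeg f E' v < bdeg f E' v)%N -> ok (E' :\ [set v; u]) v.
Proof.
move=> vu uB uN lt; rewrite /ok /rdeg /bdeg nbhd_rem //.
have -> : (nbhd E' v :\ u) :&: red f = nbhd E' v :&: red f.
  apply/setP=> x; rewrite !in_setI !in_setD1; have [->|//] := eqVneq x u.
  have uR : (u \in red f) = false by rewrite inR uB.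
  by rewrite uR !andbF.
have -> : (nbhd E' v :\ u) :&: blue f = (nbhd E' v :&: blue f) :\ u.
  by apply/setP => x; rewrite !in_setI !in_setD1 ?in_setI; case: (x != u).
move: lt; rewrite /rdeg /bdeg (cardsD1 u (nbhd E' v :&: blue f)) in_setI uN uB /=.
by rewrite add1n ltnS.
Qed.

Lemma opt_IP E E' : MIAE_optimal f E E' -> IP_feasible f E (indicator (E' :\: E)).
Proof.
move=> O; have sY := opt_sub O.
have [[He [sub Hok]] Om] := O.
set Y := E' :\: E.
have eqE' : E' = E :|: Y by rewrite /Y EU.
have dj := disjY sY.
have okv : forall v, (rdeg f E v + rdeg f Y v <= bdeg f E v + bdeg f Y v)%N.
  by move=> v; rewrite -rdegU // -bdegU // -eqE' -/(ok E' v) -okE.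
split; [|split].
- by move=> e _; rewrite /indicator; case: (e \in Y); [right|left].
- move=> v vR; rewrite sum_ind // bstar_red //.
  have r0 := red_rdeg0 sY vR.
  have H : (0 < bdeg f Y v)%N -> (bdeg f E v + bdeg f Y v <= rdeg f E v)%N.
    move=> kpos; rewrite leqNgt; apply/negP => lt.
    have [u] : exists u, u \in nbhd Y v :&: blue f by apply/set0Pn; rewrite -card_gt0.
    rewrite in_setI => /andP[uY uB].
    have uv : u != v by apply/eqP => h; move: vR; rewrite inR -h uB.
    move: uY; rewrite in_nbhd in_setD => /andP[nE inE'].
    apply: (@opt_no_rem E E' v u O); first (by rewrite set2C); first (by rewrite set2C); first by rewrite eq_sym.
    + apply: ok_rem_blue; first by rewrite eq_sym.
      * exact: uB.
      * by rewrite in_nbhd.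
      * by rewrite eqE' rdegU // bdegU // r0 addn0.
    + rewrite set2C; apply: ok_rem_red => //; by rewrite -okE.
  have := okv v; rewrite r0 => hv.
  by apply: A1; rewrite addn0 in hv.
- move=> v vB; rewrite !sum_ind // bstar_blue //.
  exact: A2 (okv v).
Qed.

Lemma ip_feas E Y : is_edge_set E -> Y \subset Estar f E ->
  IP_feasible f E (indicator Y) -> MIAE_feasible f E (E :|: Y).
Proof.
move=> HE sY [_ [H2 H3]]; have dj := disjY sY.
split; [|split].
- move=> e /setUP[/HE //|/(subsetP sY)]; by rewrite inE => /and3P[/eqP].
- exact: subsetUl.
- move=> v; rewrite okE /ok rdegU // bdegU //.
  case vB: (v \in blue f).
  + by have := H3 v vB; rewrite !sum_ind // bstar_blue //; apply: A3.
  + have vR : v \in red f by rewrite inR vB.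
    have := H2 v vR; rewrite !sum_ind // bstar_red // (red_rdeg0 sY vR).
    exact: A4.
Qed.

Lemma agree_feas E (y z : {set T} -> int) :
  (forall e, e \in Estar f E -> y e = z e) ->
  (forall e, e \in Estar f E -> z e = 0 \/ z e = 1) ->
  IP_feasible f E y -> IP_feasible f E z /\ IP_obj f E y = IP_obj f E z.
Proof.
move=> yz z01 [_ [H2 H3]].
have S : forall v C, \sum_(u in nbhd (Estar f E) v :&: C) y [set u; v] =
                     \sum_(u in nbhd (Estar f E) v :&: C) z [set u; v].
  move=> v C; apply: eq_bigr => u; rewrite in_setI in_nbhd => /andP[h _].
  exact: yz _ h.
split; first split => //; first split.
- by move=> v vR; rewrite -S H2.
- by move=> v vB; rewrite -!S H3.
- by rewrite /IP_obj; congr (- _); apply: eq_bigr => e; exact: yz.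
Qed.

Definition supp E (y : {set T} -> int) := [set e in Estar f E | y e == 1].

Lemma supp_sub E y : supp E y \subset Estar f E.
Proof. by apply/subsetP => e; rewrite inE => /andP[]. Qed.

Lemma supp_feas E y : IP_feasible f E y ->
  IP_feasible f E (indicator (supp E y)) /\
  IP_obj f E y = IP_obj f E (indicator (supp E y)).
Proof.
move=> F; have [H1 _] := F; apply: agree_feas F.
- move=> e h; rewrite /indicator inE h /=.
  by case: (H1 e h) => ->.
- by move=> e _; rewrite /indicator; case: (_ \in _); [right|left].
Qed.

Lemma complete_feas E : is_edge_set E -> (#|red f| < #|blue f|)%N ->
  MIAE_feasible f E [set e : {set T} | #|e| == 2%N].
Proof.
move=> HE HRB; split; [|split].
- by move=> e; rewrite inE => /eqP.
- by apply/subsetP => e /HE h; rewrite inE h.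
- move=> v; rewrite okE /ok /rdeg /bdeg.
  have N : forall C : {set T}, nbhd [set e : {set T} | #|e| == 2%N] v :&: C = C :\ v.
    move=> C; apply/setP => u; rewrite in_setI in_setD1 in_nbhd inE cards2.
    by case: (u != v).
  rewrite !N.
  move: HRB; rewrite (cardsD1 v (red f)) (cardsD1 v (blue f)).
  case vB: (v \in blue f).
  + have -> : (v \in red f) = false by rewrite inR vB.
    by rewrite /= add0n add1n ltnS.
  + have -> : (v \in red f) = true by rewrite inR vB.
    by rewrite /= add0n add1n => h; exact: ltnW (ltnW h).
Qed.

Lemma exists_opt E : (exists E0, MIAE_feasible f E E0) ->
  exists E', MIAE_optimal f E E'.
Proof.
move=> [E0 F0].
have : forall n E0, MIAE_feasible f E E0 -> (#|E0 :\: E| <= n)%N ->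
  exists E', MIAE_optimal f E E'.
  elim=> [|n IH] E1 F1 le;
  (destruct (classic (forall E'', MIAE_feasible f E E'' ->
             (#|E1 :\: E| <= #|E'' :\: E|)%N)) as [h|h];
   [by exists E1|]);
  apply not_all_ex_not in h; case: h => E2 h;
  apply imply_to_and in h; case: h => F2 /negP; rewrite -ltnNge => lt.
  + by move: (leq_trans lt le).
  + by apply: (IH E2) => //; rewrite -ltnS; apply: leq_trans lt le.
by move=> /(_ _ E0 F0 (leqnn _)).
Qed.

End Aux.

Unset Implicit Arguments.

Theorem mainTheorem6 (T : finType) (E : {set {set T}}) (f : T -> colour) :
  is_edge_set E ->
  (#|red f| < #|blue f|)%N ->
  (forall Y : {set {set T}}, Y \subset Estar f E ->
     (IP_optimal f E (indicator Y) <-> MIAE_optimal f E (E :|: Y))) /\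
  (forall E', MIAE_optimal f E E' -> E' :\: E \subset Estar f E) /\
  ((exists y, IP_optimal f E y) /\ (exists E', MIAE_optimal f E E') /\
   forall y E', IP_optimal f E y -> MIAE_optimal f E E' ->
     IP_obj f E y = - (#|E' :\: E|%:Z)).
Proof.
move=> HE HRB.
have [Eo Oo] : exists E', MIAE_optimal f E E'.
  by apply: exists_opt; exists [set e : {set T} | #|e| == 2%N]; apply: complete_feas.
have part1 : forall Y : {set {set T}}, Y \subset Estar f E ->
     (IP_optimal f E (indicator Y) <-> MIAE_optimal f E (E :|: Y)).
  move=> Y sY; split.
  - move=> [FY Hopt]; split; first exact: ip_feas.
    move=> E'' F''; rewrite (YD sY).
    have := Hopt _ (opt_IP Oo).
    rewrite !obj_ind //; last exact: opt_sub.
    rewrite lerN2 lez_nat => h; apply: leq_trans h _.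
    exact: Oo.2 _ F''.
  - move=> O; have := opt_IP O; rewrite (YD sY) => FY; split => // y' F'.
    have [Fs ->] := supp_feas F'.
    have := O.2 _ (ip_feas HE (supp_sub f E y') Fs).
    rewrite (YD sY) (YD (supp_sub f E y')).
    rewrite !obj_ind //; last exact: supp_sub.
    by rewrite lerN2 lez_nat.
split => //; split; first exact: opt_sub.
split.
  exists (indicator (Eo :\: E)); apply/part1; first exact: opt_sub.
  by rewrite EU //; have [[_ []]] := Oo.
split; first by exists Eo.
move=> y E' [Fy Hy] O'.
have [Fs eq] := supp_feas Fy.
have sS := supp_sub f E y.
have Os : IP_optimal f E (indicator (supp f E y)).
  by split => // y'' F''; rewrite -eq; apply: Hy.
have := (part1 _ sS).1 Os => O2.
have h1 := O2.2 _ O'.1; have h2 := O'.2 _ O2.1.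
rewrite (YD sS) in h1 h2.
rewrite eq obj_ind //.
have -> : #|supp f E y| = #|E' :\: E| by apply/eqP; rewrite eqn_leq h1.
by [].
Qed.
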